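(* Let $(X_k;\leq_k)_{k\in K}$ be a family of pairwise disjoint nonempty posets, and let $X=\bigcup_{k\in K}X_k$ with order $\leq=\bigcup_{k\in K}\leq_k$ (disjoint union of posets). Then the following are equivalent: (i) for each $k\in K$, the space $(X_k;\tau_i(X_k))$ is compact; (ii) $(X;\tau_i(X))$ is compact.
   Context: For a poset $X$ and $x\in X$, $(x]=\{z: z\le x\}$, $[x)=\{z: z\ge x\}$. The interval topology $\tau_i(X)$ on a poset $X$ is the topology with subbase $\{X\setminus (x]: x\in X\}\cup\{X\setminus [x): x\in X\}$. *)

(* Defs.v *)
From Stdlib Require Import List Relation_Definitions.
Export ListNotations.

Definition generated_open {T : Type} (S : (T -> Prop) -> Prop) (U : T -> Prop) : Prop :=
  forall x, U x ->
    exists l : list (T -> Prop),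
      (forall V, In V l -> S V) /\
      (forall V, In V l -> V x) /\
      (forall y, (forall V, In V l -> V y) -> U y).

(* Subbase of the interval topology: X \ (a] and X \ [a). *)
Definition interval_subbase {T : Type} (le : T -> T -> Prop) (V : T -> Prop) : Prop :=
  exists a : T,
    (forall z, V z <-> ~ le z a) \/ (forall z, V z <-> ~ le a z).

Definition interval_open {T : Type} (le : T -> T -> Prop) : (T -> Prop) -> Prop :=
  generated_open (interval_subbase le).

Definition compact {T : Type} (open : (T -> Prop) -> Prop) : Prop :=
  forall (I : Type) (U : I -> T -> Prop),
    (forall i, open (U i)) ->
    (forall x : T, exists i, U i x) ->
    exists l : list I, forall x : T, exists i, In i l /\ U i x.

(* Disjoint union of the posets (X k, le k): carrier is the sigma type,
   and p <= q iff they lie in the same component and are related there. *)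
Definition sum_le {K : Type} {X : K -> Type} (le : forall k, X k -> X k -> Prop)
  (p q : {k : K & X k}) : Prop :=
  exists e : projT1 p = projT1 q,
    le (projT1 q) (eq_rect (projT1 p) X (projT2 p) (projT1 q) e) (projT2 q).

(* Main.v *)
Require Import Defs.
From Stdlib Require Import List Relation_Definitions Classical Eqdep.

Lemma sum_le_same {K : Type} {X : K -> Type} (le : forall k, X k -> X k -> Prop) k x y :
  sum_le le (existT X k x) (existT X k y) <-> le k x y.
Proof.
  split.
  - intros [e H]. simpl in *. rewrite <- eq_rect_eq in H. exact H.
  - intros H. exists eq_refl. exact H.
Qed.

Lemma sum_le_comp {K : Type} {X : K -> Type} (le : forall k, X k -> X k -> Prop) p q :
  sum_le le p q -> projT1 p = projT1 q.
Proof. intros [e _]; exact e. Qed.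

Lemma restrict_list {K : Type} {X : K -> Type} (le : forall k, X k -> X k -> Prop) m z :
  forall L : list ({k : K & X k} -> Prop),
  (forall V, In V L -> interval_subbase (sum_le le) V) ->
  (forall V, In V L -> V (existT X m z)) ->
  exists L', (forall V, In V L' -> interval_subbase (le m) V) /\ (forall V, In V L' -> V z) /\
    forall z', (forall V, In V L' -> V z') -> forall V, In V L -> V (existT X m z').
Proof.
  induction L as [|V L IH]; intros HS HV.
  - exists nil. repeat split; simpl; tauto.
  - destruct IH as [L' [H1 [H2 H3]]];
      [intros; apply HS; simpl; auto | intros; apply HV; simpl; auto |].
    destruct (HS V (or_introl eq_refl)) as [[m' c] Hc].
    destruct (classic (m' = m)) as [E|E].
    + subst m'. exists ((fun w => V (existT X m w)) :: L'). split; [|split].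
      * intros V' [<-|HV']; [|apply H1; auto]. exists c.
        destruct Hc as [Hc|Hc]; [left|right]; intros w; split; intro G.
        -- intro Hl. apply (proj1 (Hc _) G). apply (proj2 (sum_le_same le _ _ _)); exact Hl.
        -- apply Hc. intro Hl. apply G. apply (proj1 (sum_le_same le _ _ _)); exact Hl.
        -- intro Hl. apply (proj1 (Hc _) G). apply (proj2 (sum_le_same le _ _ _)); exact Hl.
        -- apply Hc. intro Hl. apply G. apply (proj1 (sum_le_same le _ _ _)); exact Hl.
      * intros V' [<-|HV']; [apply HV; simpl; auto|apply H2; exact HV'].
      * intros z' Hz' V' [<-|HV'].
        -- apply (Hz' _ (or_introl eq_refl)).
        -- apply H3; auto. intros; apply Hz'; simpl; auto.
    + exists L'. split; [auto|split;[auto|]].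
      intros z' Hz' V' [<-|HV']; [|apply H3; auto].
      destruct Hc as [Hc|Hc]; apply Hc; intros Hle; apply sum_le_comp in Hle;
        simpl in Hle; congruence.
Qed.

Lemma restrict_open {K : Type} {X : K -> Type} (le : forall k, X k -> X k -> Prop) m U :
  interval_open (sum_le le) U -> interval_open (le m) (fun z => U (existT X m z)).
Proof.
  intros HU z Hz. destruct (HU _ Hz) as [L [H1 [H2 H3]]].
  destruct (restrict_list le m z L H1 H2) as [L' [A [B C]]].
  exists L'. split;[auto|split;[auto|]]. intros y Hy. apply H3. apply C. auto.
Qed.

Definition lift {K : Type} {X : K -> Type} k (V : X k -> Prop) : {k : K & X k} -> Prop :=
  fun p => forall z, p = existT X k z -> V z.

Lemma lift_at {K : Type} {X : K -> Type} k (V : X k -> Prop) z :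
  lift k V (existT X k z) <-> V z.
Proof.
  split.
  - intros H. apply H. reflexivity.
  - intros H z' E. apply inj_pair2 in E. subst; auto.
Qed.

Lemma lift_out {K : Type} {X : K -> Type} k (V : X k -> Prop) p :
  projT1 p <> k -> lift k V p.
Proof. intros H z E; subst p; simpl in H; congruence. Qed.

Lemma lift_sub {K : Type} {X : K -> Type} (le : forall k, X k -> X k -> Prop) k V :
  interval_subbase (le k) V -> interval_subbase (sum_le le) (lift k V).
Proof.
  intros [a [Ha|Ha]]; exists (existT X k a); [left|right]; intros [m w]; split.
  - intros HL Hle. pose proof (sum_le_comp _ _ _ Hle) as E; simpl in E. subst m.
    apply (proj1 (sum_le_same le _ _ _)) in Hle. apply (proj1 (lift_at k V w)) in HL. apply (proj1 (Ha w) HL). auto.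
  - intros Hn z E. assert (E' := f_equal (@projT1 K X) E). simpl in E'. subst m.
    apply inj_pair2 in E. subst w. apply Ha. intro Hle. apply Hn. apply (proj2 (sum_le_same le _ _ _)); exact Hle.
  - intros HL Hle. pose proof (sum_le_comp _ _ _ Hle) as E; simpl in E. subst m.
    apply (proj1 (sum_le_same le _ _ _)) in Hle. apply (proj1 (lift_at k V w)) in HL. apply (proj1 (Ha w) HL). auto.
  - intros Hn z E. assert (E' := f_equal (@projT1 K X) E). simpl in E'. subst m.
    apply inj_pair2 in E. subst w. apply Ha. intro Hle. apply Hn. apply (proj2 (sum_le_same le _ _ _)); exact Hle.
Qed.

Theorem lemma2p1 (K : Type) (X : K -> Type)
  (le : forall k, X k -> X k -> Prop)
  (Hord : forall k, order (X k) (le k))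
  (Hne : forall k, inhabited (X k)) :
  (forall k, compact (interval_open (le k))) <->
  compact (interval_open (@sum_le K X le)).
Proof.
  split.
  - intros Hc I U HUo Hcov.
    destruct (classic (inhabited {k : K & X k})) as [[p0]|Hn].
    2: { exists nil; intros x; exfalso; apply Hn; constructor; exact x. }
    destruct (Hcov p0) as [i0 Hi0]. destruct (HUo i0 p0 Hi0) as [L [HL1 [HL2 HL3]]].
    assert (Hind: forall L0 : list ({k : K & X k} -> Prop),
      (forall V, In V L0 -> interval_subbase (sum_le le) V) ->
      exists l, forall p, (exists V, In V L0 /\ ~ V p) -> exists i, In i l /\ U i p).
    { induction L0 as [|V L' IH]; intros HS.
      - exists nil. intros p [V [[] _]].
      - destruct IH as [l Hl]. { intros; apply HS; simpl; auto. }
        destruct (HS V (or_introl eq_refl)) as [[m c] Hc0].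
        destruct (Hc m I (fun i z => U i (existT X m z))) as [lm Hlm].
        { intros i; apply restrict_open; auto. }
        { intros z; apply Hcov. }
        exists (lm ++ l). intros p [V' [[<-|Hin] Hn']].
        + destruct p as [m' w].
          assert (Hle: sum_le le (existT X m' w) (existT X m c) \/
                       sum_le le (existT X m c) (existT X m' w)).
          { destruct Hc0 as [Hc0|Hc0]; [left|right]; apply NNPP; intro H;
              apply Hn'; apply Hc0; exact H. }
          assert (E : m' = m).
          { destruct Hle as [Hle|Hle]; apply sum_le_comp in Hle; simpl in Hle; auto. }
          subst m'.
          destruct (Hlm w) as [i [Hi1 Hi2]]; exists i; split; [apply in_or_app; auto| auto].
        + destruct (Hl p) as [i [Hi1 Hi2]]; eauto.
          exists i; split; [apply in_or_app; auto|auto]. }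
    destruct (Hind L HL1) as [l Hl]. exists (i0 :: l). intros p.
    destruct (classic (forall V, In V L -> V p)) as [H|H].
    + exists i0; split; [left; auto| apply HL3; auto].
    + apply not_all_ex_not in H. destruct H as [V HV]. apply imply_to_and in HV.
      destruct (Hl p) as [i [? ?]]. { exists V; tauto. }
      exists i; split; [right|]; auto.
  - intros Hc k I U HUo Hcov.
    set (W := fun i p => exists L : list (X k -> Prop),
      (forall V, In V L -> interval_subbase (le k) V) /\
      (forall z, (forall V, In V L -> V z) -> U i z) /\
      (forall V, In V L -> lift k V p)).
    destruct (Hc I W) as [l Hl].
    + intros i p [L [A [B C]]]. exists (map (lift k) L). split; [|split].
      * intros V' HV'. apply in_map_iff in HV'. destruct HV' as [V [<- HV]].
        apply (lift_sub le k V); auto.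
      * intros V' HV'. apply in_map_iff in HV'. destruct HV' as [V [<- HV]]. auto.
      * intros q Hq. exists L. split; [auto|split;[auto|]].
        intros V HV. apply Hq. apply in_map; auto.
    + intros [m w]. destruct (classic (m = k)) as [E|E].
      * subst m. destruct (Hcov w) as [i Hi]. destruct (HUo i w Hi) as [L [A [B C]]].
        exists i, L. split; [auto|split;[auto|]]. intros V HV. apply (proj2 (lift_at k V _)); apply B; exact HV.
      * destruct (Hne k) as [x0]. destruct (Hcov x0) as [i Hi].
        destruct (HUo i x0 Hi) as [L [A [B C]]].
        exists i, L. split; [auto|split;[auto|]]. intros V HV. apply (lift_out k V); auto.
    + exists l. intros z. destruct (Hl (existT X k z)) as [i [Hi [L [A [B C]]]]].
      exists i. split; auto. apply B. intros V HV. apply (proj1 (lift_at k V z)); apply C; exact HV.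
Qed.
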